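(* Let $f:\mathbb{R}^n\to\mathbb{R}$ be continuously differentiable with $L_f$-Lipschitz gradient, let $g:\mathbb{R}^n\to\mathbb{R}\cup\{+\infty\}$ be proper, closed and $M$-weakly convex, $\varphi=f+g$, and consider the MINFBE algorithm with parameters $\gamma_0>0$, $\xi\in(0,1)$, $\beta\in[0,1)$. If $0<\gamma<\min\{(1-\beta)/L_f,1/M\}$, then for every $w\in\mathbb{R}^n$ the backtracking condition $$f(T_\gamma(w))>f(w)-\gamma\langle\nabla f(w),R_\gamma(w)\rangle+\tfrac{(1-\beta)\gamma}{2}\|R_\gamma(w)\|^2$$ does not hold. Moreover, the step sizes of MINFBE satisfy $\gamma_k\ge\gamma_\infty\ge\min\{\gamma_0,\xi(1-\beta)/L_f,1/M\}>0$ for all $k$, where $\gamma_\infty=\min_{i}\gamma_i$.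
   Context: $g$ is $M$-weakly convex if $g+\frac M2\|\cdot\|^2$ is convex. For $\gamma>0$: $T_\gamma(x)=\operatorname{prox}_{\gamma g}(x-\gamma\nabla f(x))$ with $\operatorname{prox}_{\gamma g}(x)=\arg\min_u\{g(u)+\frac1{2\gamma}\|u-x\|^2\}$, $R_\gamma(x)=\gamma^{-1}(x-T_\gamma(x))$, and $\varphi_\gamma(x)=\min_u\{f(x)+\langle\nabla f(x),u-x\rangle+g(u)+\frac1{2\gamma}\|u-x\|^2\}$. MINFBE: given $x^0$, $\gamma_0>0$, $\xi\in(0,1)$, $\beta\in[0,1)$, set $k=0$ and repeat: (1) if $R_{\gamma_k}(x^k)=0$ stop; (2) choose $d^k$ with $\langle d^k,\nabla\varphi_{\gamma_k}(x^k)\rangle\le0$; (3) choose $\tau_k\ge0$ and $w^k=x^k+\tau_kd^k$ with $\varphi_{\gamma_k}(w^k)\le\varphi_{\gamma_k}(x^k)$; (4) if $f(T_{\gamma_k}(w^k))>f(w^k)-\gamma_k\langle\nabla f(w^k),R_{\gamma_k}(w^k)\rangle+\frac{(1-\beta)\gamma_k}{2}\|R_{\gamma_k}(w^k)\|^2$, replace $\gamma_k$ by $\xi\gamma_k$ and go back to (1) with the same $k$; (5) otherwise set $x^{k+1}=T_{\gamma_k}(w^k)$, $\gamma_{k+1}=\gamma_k$, $k\leftarrow k+1$ and go to (1). *)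

(* Defs.v *)
From HB Require Import structures.
From mathcomp Require Import all_boot all_order all_algebra.
From mathcomp Require Import all_classical all_reals all_analysis.
Set Implicit Arguments. Unset Strict Implicit. Unset Printing Implicit Defensive.
Import Order.TTheory GRing.Theory Num.Theory.
Import numFieldNormedType.Exports.
Local Open Scope classical_set_scope.
Local Open Scope ring_scope.

Section Defs.
Variables (R : realType) (n : nat).
Notation V := 'rV[R]_n.

Definition dotp (u v : V) : R := \sum_(i < n) u ord0 i * v ord0 i.
Definition enorm (u : V) : R := Num.sqrt (dotp u u).

Definition C1_with_gradient (f : V -> R) (gradf : V -> V) : Prop :=
  (forall x, differentiable f x) /\
  (forall x v, 'D_v f x = dotp (gradf x) v) /\
  continuous gradf.

Definition lipschitz_grad (gradf : V -> V) (L : R) : Prop :=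
  forall x y, enorm (gradf x - gradf y) <= L * enorm (x - y).

Definition proper_fun (g : V -> \bar R) : Prop :=
  (forall x, g x != -oo%E) /\ exists x, g x \is a fin_num.

(* closed = lower semicontinuous = closed epigraph *)
Definition closed_fun (g : V -> \bar R) : Prop :=
  closed [set p : V * R | (g p.1 <= p.2%:E)%E].

Definition convex_efun (h : V -> \bar R) : Prop :=
  forall (x y : V) (t : R), 0 < t < 1 ->
    (h ((1 - t) *: x + t *: y)%R <= (1 - t)%:E * h x + t%:E * h y)%E.

Definition weakly_convex (g : V -> \bar R) (M : R) : Prop :=
  convex_efun (fun x => (g x + (M / 2 * enorm x ^+ 2)%:E)%E).

Definition is_prox (g : V -> \bar R) (gam : R) (x u : V) : Prop :=
  forall v, (g u + (1 / (2 * gam) * enorm (u - x) ^+ 2)%:E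
             <= g v + (1 / (2 * gam) * enorm (v - x) ^+ 2)%:E)%E.

Definition is_T (gradf : V -> V) (g : V -> \bar R) (gam : R) (x u : V) : Prop :=
  is_prox g gam (x - gam *: gradf x) u.

(* R_gam(x) = gam^-1 (x - T_gam(x)), given the value u of T_gam(x) *)
Definition resid (gam : R) (x u : V) : V := gam^-1 *: (x - u).

(* forward-backward envelope phi_gam(x) (the min, written as an inf) *)
Definition fbe (f : V -> R) (gradf : V -> V) (g : V -> \bar R) (gam : R)
  (x : V) : \bar R :=
  ereal_inf [set ((f x + dotp (gradf x) (u - x))%:E + g u
                  + (1 / (2 * gam) * enorm (u - x) ^+ 2)%:E)%E | u in setT].

Definition backtrack_cond (f : V -> R) (gradf : V -> V) (beta gam : R)
  (w u : V) : Prop :=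
  f u > f w - gam * dotp (gradf w) (resid gam w u)
        + (1 - beta) * gam / 2 * enorm (resid gam w u) ^+ 2.

(* A run of MINFBE, recorded event by event: at event t the algorithm is at
   iterate x t with current step size gam t; w t is the trial point chosen in
   steps (2)-(3) and u t = T_{gam t}(w t).  Event t is "stopped" if
   R_{gam t}(x t) = 0, i.e. T_{gam t}(x t) = x t. *)
Definition stopped (gradf : V -> V) (g : V -> \bar R) (x : nat -> V)
  (gam : nat -> R) (t : nat) : Prop :=
  is_T gradf g (gam t) (x t) (x t).

Definition reached (gradf : V -> V) (g : V -> \bar R) (x : nat -> V)
  (gam : nat -> R) (t : nat) : Prop :=
  forall s, (s < t)%N -> ~ stopped gradf g x gam s.

Definition minfbe_run (f : V -> R) (gradf : V -> V) (g : V -> \bar R)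
  (gam0 xi beta : R) (x w u : nat -> V) (gam : nat -> R) : Prop :=
  gam 0%N = gam0 /\
  forall t, reached gradf g x gam t -> ~ stopped gradf g x gam t ->
    [/\
        (fbe f gradf g (gam t) (w t) <= fbe f gradf g (gam t) (x t))%E,
        is_T gradf g (gam t) (w t) (u t),
        backtrack_cond f gradf beta (gam t) (w t) (u t) ->
          gam t.+1 = xi * gam t /\ x t.+1 = x t &
        ~ backtrack_cond f gradf beta (gam t) (w t) (u t) ->
          gam t.+1 = gam t /\ x t.+1 = u t].

End Defs.

(* Main.v *)
Require Import Defs.
From HB Require Import structures.
From mathcomp Require Import all_boot all_order all_algebra.
From mathcomp Require Import all_classical all_reals all_analysis.
From mathcomp Require Import ring lra.
Import Order.TTheory GRing.Theory Num.Theory.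
Import numFieldNormedType.Exports.
Local Open Scope classical_set_scope.
Local Open Scope ring_scope.

Section Dot.
Variables (R : realType) (n : nat).
Notation V := 'rV[R]_n.
Implicit Types u v w : V.

Lemma dotpC u v : dotp u v = dotp v u.
Proof. by rewrite /dotp; apply: eq_bigr => i _; rewrite mulrC. Qed.
Lemma dotpDr u v w : dotp u (v + w) = dotp u v + dotp u w.
Proof. by rewrite /dotp -big_split; apply: eq_bigr => i _; rewrite !mxE mulrDr. Qed.
Lemma dotpZr u v a : dotp u (a *: v) = a * dotp u v.
Proof. by rewrite /dotp mulr_sumr; apply: eq_bigr => i _; rewrite !mxE mulrCA. Qed.
Lemma dotpNr u v : dotp u (- v) = - dotp u v.
Proof. by rewrite -scaleN1r dotpZr mulN1r. Qed.
Lemma dotpBr u v w : dotp u (v - w) = dotp u v - dotp u w.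
Proof. by rewrite dotpDr dotpNr. Qed.
Lemma dotpDl u v w : dotp (v + w) u = dotp v u + dotp w u.
Proof. by rewrite dotpC dotpDr !(dotpC u). Qed.
Lemma dotpZl u v a : dotp (a *: v) u = a * dotp v u.
Proof. by rewrite dotpC dotpZr dotpC. Qed.
Lemma dotpBl u v w : dotp (v - w) u = dotp v u - dotp w u.
Proof. by rewrite dotpC dotpBr !(dotpC u). Qed.
Lemma dotp_ge0 u : 0 <= dotp u u.
Proof. by rewrite /dotp; apply: sumr_ge0 => i _; rewrite -expr2 sqr_ge0. Qed.
Lemma enorm_sq u : enorm u ^+ 2 = dotp u u.
Proof. by rewrite /enorm sqr_sqrtr // dotp_ge0. Qed.

Lemma key_ineq (D d : V) (c : R) : 0 < c ->
  dotp D D <= c ^+ 2 * dotp d d -> dotp D d <= c * dotp d d.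
Proof.
move=> c0 h.
have := dotp_ge0 (D - c *: d).
rewrite !(dotpBl, dotpBr, dotpZl, dotpZr) (dotpC d D) => h2.
have : 2 * c * dotp D d <= 2 * c * (c * dotp d d) by nra.
by rewrite ler_pM2l // mulr_gt0.
Qed.

Lemma descent (f : V -> R) (gradf : V -> V) (L : R) (w u : V) :
  0 < L -> C1_with_gradient f gradf -> lipschitz_grad gradf L ->
  f u <= f w + dotp (gradf w) (u - w) + L / 2 * dotp (u - w) (u - w).
Proof.
move=> L0 [Hdif [HD _]] Hlip.
set d := u - w; set a := dotp (gradf w) d; set b := L / 2 * dotp d d.
pose h := fun t : R => f (t *: d + w).
have hd : forall t : R, is_derive t (1:R) h (dotp (gradf (t *: d + w)) d).
  move=> t; set x := t *: d + w.
  have E : (fun s : R => s^-1 *: ((h \o shift t) (s *: 1) - h t)) =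
           (fun s : R => s^-1 *: ((f \o shift x) (s *: d) - f x)).
    apply/funext => s /=; rewrite /h /x; congr (_ *: (f _ - _)).
    by rewrite scalerDl addrA [_%:A]mulr1.
  have Hf : derivable f x d by apply: diff_derivable.
  apply: DeriveDef; first by rewrite /derivable E.
  by rewrite -HD /derive E.
pose k := h - ((fun t => t) * cst a + ((fun t => t) ^+ 2) * cst b).
have kd : forall t : R, is_derive t (1:R) k (dotp (gradf (t *: d + w)) d - (a + 2 * t * b)).
  move=> t; apply: is_derive_eq.
  rewrite /= !scaler0 !add0r ![_%:A]mulr1 expr1; congr (_ - (_ + _)); exact: mulrC.
have [c c01 Hc] := @MVT R k _ 0 1 ltr01 (fun t _ => kd t)
   (derivable_within_continuous (fun t _ => @ex_derive _ _ _ _ _ _ _ (kd t))).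
have : dotp (gradf (c *: d + w)) d - (a + 2 * c * b) <= 0.
  move: c01; rewrite in_itv /= => /andP[c0 c1].
  suff H : dotp (gradf (c *: d + w) - gradf w) d <= (c * L) * dotp d d.
    by move: H; rewrite dotpBl /a /b; lra.
  apply: key_ineq; first by rewrite mulr_gt0.
  rewrite -!enorm_sq.
  have := Hlip (c *: d + w) w; rewrite addrK => Hl.
  have : enorm (gradf (c *: d + w) - gradf w) ^+ 2 <= (L * enorm (c *: d)) ^+ 2.
    have e0 : forall v : V, 0 <= enorm v by move=> v; rewrite /enorm sqrtr_ge0.
    rewrite lerXn2r // nnegrE // mulr_ge0 // ltW //.
  rewrite !exprMn !enorm_sq dotpZl dotpZr; nra.
rewrite subr0 mulr1 in Hc; rewrite -Hc.
have -> : k 1 = h 1 - (1 * a + 1 ^+ 2 * b) by [].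
have -> : k 0 = h 0 - (0 * a + 0 ^+ 2 * b) by [].
rewrite /h scale0r scale1r add0r /d subrK; lra.
Qed.

Lemma dotpNl u v : dotp (- v) u = - dotp v u.
Proof. by rewrite dotpC dotpNr dotpC. Qed.

Lemma part1 (f : V -> R) (gradf : V -> V) (g : V -> \bar R) (L beta gam : R) :
  0 < L -> C1_with_gradient f gradf -> lipschitz_grad gradf L ->
  0 < gam -> gam < (1 - beta) / L ->
  forall w u : V, ~ backtrack_cond f gradf beta gam w u.
Proof.
move=> L0 C1 Hlip g0 glt w u Hb.
have Hd := @descent f gradf L w u L0 C1 Hlip.
move: Hb; rewrite /backtrack_cond /resid enorm_sq dotpZr dotpZl dotpZr.
rewrite -(opprB u w) dotpNr dotpNl dotpNr opprK.
set a := dotp (gradf w) (u - w) in Hd *; set D := dotp (u - w) (u - w) in Hd *.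
set ig := gam^-1.
have gi : gam * ig = 1 by rewrite /ig divff // gt_eqF.
have ig0 : 0 < ig by rewrite /ig invr_gt0.
have D0 : 0 <= D by rewrite /D dotp_ge0.
have gL : gam * L < 1 - beta by rewrite -ltr_pdivlMr.
have E1 : gam * (ig * - a) = - a by rewrite mulrA gi mul1r.
have E2 : (1 - beta) * gam / 2 * (ig * (ig * D)) = (1 - beta) * ig / 2 * D.
  by rewrite /ig; field; rewrite gt_eqF.
rewrite E1 E2 => Hb.
have H3 : gam * L * (ig * D) <= (1 - beta) * (ig * D) by apply: ler_wpM2r; [rewrite mulr_ge0 // ltW | exact: ltW].
have H4 : gam * L * (ig * D) = L * D.
  by rewrite /ig; field; rewrite gt_eqF.
rewrite H4 in H3.
have H5 : (1 - beta) * (ig * D) = (1 - beta) * ig * D by rewrite mulrA.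
lra.
Qed.
End Dot.

Theorem lemma2p8 (R : realType) (n : nat) (f : 'rV[R]_n -> R)
  (gradf : 'rV[R]_n -> 'rV[R]_n) (g : 'rV[R]_n -> \bar R) (L M : R)
  (gam0 xi beta : R) :
  0 < L -> 0 < M ->
  C1_with_gradient f gradf -> lipschitz_grad gradf L ->
  proper_fun g -> closed_fun g -> weakly_convex g M ->
  0 < gam0 -> 0 < xi < 1 -> 0 <= beta < 1 ->
  (forall gam : R, 0 < gam -> gam < Num.min ((1 - beta) / L) (1 / M) ->
     forall w u : 'rV[R]_n, is_T gradf g gam w u ->
       ~ backtrack_cond f gradf beta gam w u)
  /\
  (forall (x w u : nat -> 'rV[R]_n) (gam : nat -> R),
     minfbe_run f gradf g gam0 xi beta x w u gam ->
     let gam_inf := inf [set gam t | t in reached gradf g x gam] in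
     (forall k, reached gradf g x gam k -> gam_inf <= gam k) /\
     Num.min gam0 (Num.min (xi * (1 - beta) / L) (1 / M)) <= gam_inf /\
     0 < Num.min gam0 (Num.min (xi * (1 - beta) / L) (1 / M))).
Proof.
move=> L0 M0 C1 Hlip _ _ _ g00 /andP[xi0 xi1] /andP[b0 b1].
have P1 := fun gam => @part1 R n f gradf g L beta gam L0 C1 Hlip.
split.
  move=> gam g0; rewrite lt_min => /andP[glt _] w u _.
  exact: P1.
move=> x w u gam [Hg0 Hrun] gam_inf.
set m := Num.min gam0 (Num.min (xi * (1 - beta) / L) (1 / M)).
have m0 : 0 < m.
  by rewrite /m !lt_min g00 !divr_gt0 ?mulr_gt0 ?subr_gt0.
have Hm : forall t, reached gradf g x gam t -> m <= gam t.
  elim=> [_|t IH Hr]; first by rewrite Hg0 /m ge_min lexx.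
  have Hrt : reached gradf g x gam t.
    by move=> s st; apply: Hr; rewrite ltnS ltnW.
  have Hns : ~ stopped gradf g x gam t by apply: Hr; rewrite ltnSn.
  have mt := IH Hrt.
  have gt0 : 0 < gam t := lt_le_trans m0 mt.
  case: (Hrun t Hrt Hns) => _ HT Hbt Hnbt.
  case: (pselect (backtrack_cond f gradf beta (gam t) (w t) (u t))) => Hb.
    case: (Hbt Hb) => -> _.
    have H1 : (1 - beta) / L <= gam t.
      rewrite leNgt; apply/negP => lt; exact: (P1 _ gt0 lt _ _ Hb).
    have H2 : m <= xi * (1 - beta) / L by rewrite /m !ge_min lexx /= !orbT.
    apply: (le_trans H2); rewrite -mulrA ler_wpM2l // ltW //.
  by case: (Hnbt Hb) => -> _.
have Hlb : lbound [set gam t | t in reached gradf g x gam] m.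
  by move=> _ [t rt <-]; exact: Hm.
split.
  move=> k rk; apply: (ge_inf (ex_intro _ m Hlb)); by exists k.
split => //.
apply: lb_le_inf => //; exists (gam 0%N); exists 0%N => //.
Qed.
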